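(* Let $V$ be a real vector space with an inner product of signature $(p,q)$ where $p\ge2$ and $q\ge2$. Then: (1) There exists an algebraic curvature tensor $R$ on $V$ which has spacelike rank $2$ but which does not have constant timelike rank nor constant mixed rank. (2) There exists an algebraic curvature tensor $R$ on $V$ which has timelike rank $2$ but which does not have constant spacelike rank nor constant mixed rank. (3) There exists an algebraic curvature tensor $R$ on $V$ which has spacelike rank $2$ and timelike rank $2$ but which does not have constant mixed rank.
   Context: An inner product of signature $(p,q)$ is a non-degenerate symmetric bilinear form $(\cdot,\cdot)$ whose maximal negative definite subspaces have dimension $p$ and maximal positive definite subspaces dimension $q$. A $2$-plane $\pi$ is spacelike (resp. timelike, mixed) if the induced form on $\pi$ has signature $(0,2)$ (resp. $(2,0)$, $(1,1)$). An algebraic curvature tensor is $R\in\otimes^4V^*$ with $R(x,y,z,w)=R(z,w,x,y)=-R(y,x,z,w)$ and $R(x,y,z,w)+R(y,z,x,w)+R(z,x,y,w)=0$; the operator $R(x,y)$ is defined by $R(x,y,z,w)=(R(x,y)z,w)$. For a non-degenerate $2$-plane $\pi$ with oriented basis $\{e_1,e_2\}$, $R(\pi):=|(e_1,e_1)(e_2,e_2)-(e_1,e_2)^2|^{-1/2}R(e_1,e_2)$. $R$ has spacelike rank $r$ if $\operatorname{rank}R(\pi)=r$ for every oriented spacelike $2$-plane $\pi$; timelike rank $r$ and mixed rank $r$ are defined analogously using timelike, resp. mixed, $2$-planes. $R$ has constant timelike (mixed) rank if it has timelike (mixed) rank $r$ for some $r$. *)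

(* Defs.v *)
From HB Require Import structures.
From mathcomp Require Import all_boot all_order all_algebra.
From mathcomp Require Import reals.
Set Implicit Arguments. Unset Strict Implicit. Unset Printing Implicit Defensive.
Import Order.TTheory GRing.Theory Num.Theory.
Local Open Scope ring_scope.

Section Defs.
Variable R : realType.

Definition form (k : nat) (G : 'M[R]_k) (u v : 'rV[R]_k) : R := (u *m G *m v^T) 0 0.

Definition neg_def_on (k m : nat) (G : 'M[R]_k) (U : 'M[R]_(m, k)) : Prop :=
  forall v : 'rV[R]_k, (v <= U)%MS -> v != 0 -> form G v v < 0.
Definition pos_def_on (k m : nat) (G : 'M[R]_k) (U : 'M[R]_(m, k)) : Prop :=
  forall v : 'rV[R]_k, (v <= U)%MS -> v != 0 -> 0 < form G v v.

Definition has_signature (k : nat) (G : 'M[R]_k) (p q : nat) : Prop :=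
  [/\ G \in unitmx,
      exists U : 'M[R]_(p, k), row_free U /\ neg_def_on G U,
      forall m (U : 'M[R]_(m, k)), neg_def_on G U -> (\rank U <= p)%N,
      exists U : 'M[R]_(q, k), row_free U /\ pos_def_on G U &
      forall m (U : 'M[R]_(m, k)), pos_def_on G U -> (\rank U <= q)%N].

Definition multilinear4 (n : nat) (T : 'rV[R]_n -> 'rV[R]_n -> 'rV[R]_n -> 'rV[R]_n -> R) : Prop :=
  [/\ forall a x x' y z w, T (a *: x + x') y z w = a * T x y z w + T x' y z w,
      forall a x y y' z w, T x (a *: y + y') z w = a * T x y z w + T x y' z w,
      forall a x y z z' w, T x y (a *: z + z') w = a * T x y z w + T x y z' w &
      forall a x y z w w', T x y z (a *: w + w') = a * T x y z w + T x y z w'].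

Definition is_ACT (n : nat) (T : 'rV[R]_n -> 'rV[R]_n -> 'rV[R]_n -> 'rV[R]_n -> R) : Prop :=
  [/\ multilinear4 T,
      forall x y z w, T x y z w = T z w x y,
      forall x y z w, T x y z w = - T y x z w &
      forall x y z w, T x y z w + T y z x w + T z x y w = 0].

(* Matrix (acting on row vectors z |-> z *m A) of the operator R(x,y), defined by
   R(x,y,z,w) = (R(x,y)z, w); namely A = M G^{-1} with M_ij = R(x,y,e_i,e_j). *)
Definition curv_op (n : nat) (G : 'M[R]_n)
  (T : 'rV[R]_n -> 'rV[R]_n -> 'rV[R]_n -> 'rV[R]_n -> R) (x y : 'rV[R]_n) : 'M[R]_n :=
  (\matrix_(i < n, j < n) T x y (delta_mx 0 i) (delta_mx 0 j)) *m invmx G.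

Definition curv_plane (n : nat) (G : 'M[R]_n)
  (T : 'rV[R]_n -> 'rV[R]_n -> 'rV[R]_n -> 'rV[R]_n -> R) (E : 'M[R]_(2, n)) : 'M[R]_n :=
  let e1 := row 0 E in let e2 := row 1 E in
  (Num.sqrt `|form G e1 e1 * form G e2 e2 - form G e1 e2 ^+ 2|)^-1 *: curv_op G T e1 e2.

Definition has_plane_rank (n : nat) (G : 'M[R]_n)
  (T : 'rV[R]_n -> 'rV[R]_n -> 'rV[R]_n -> 'rV[R]_n -> R) (a b r : nat) : Prop :=
  forall E : 'M[R]_(2, n), row_free E -> has_signature (E *m G *m E^T) a b ->
    \rank (curv_plane G T E) = r.

Definition spacelike_rank n G T r := @has_plane_rank n G T 0 2 r.
Definition timelike_rank n G T r := @has_plane_rank n G T 2 0 r.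
Definition mixed_rank n G T r := @has_plane_rank n G T 1 1 r.
Definition const_timelike_rank n G T := exists r, @timelike_rank n G T r.
Definition const_mixed_rank n G T := exists r, @mixed_rank n G T r.
Definition const_spacelike_rank n G T := exists r, @spacelike_rank n G T r.

End Defs.

(* Main.v *)
Require Import Defs.
From HB Require Import structures.
From mathcomp Require Import all_boot all_order all_algebra.
From mathcomp Require Import reals ring lra.
Set Implicit Arguments. Unset Strict Implicit. Unset Printing Implicit Defensive.
Import Order.TTheory GRing.Theory Num.Theory.
Local Open Scope ring_scope.

Local Notation form := Defs.form.

Section Aux.
Variable R : realType.
Variable n : nat.
Implicit Types (G S : 'M[R]_n) (x y z w u v : 'rV[R]_n).

Lemma formDl G a x x' y : form G (a *: x + x') y = a * form G x y + form G x' y.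
Proof. by rewrite /form mulmxDl mulmxDl -!scalemxAl !mxE. Qed.

Lemma formDr G a x y y' : form G x (a *: y + y') = a * form G x y + form G x y'.
Proof. by rewrite /form linearD linearZ /= mulmxDr -scalemxAr !mxE. Qed.

Lemma formZl G a x y : form G (a *: x) y = a * form G x y.
Proof. by rewrite /form -!scalemxAl mxE. Qed.

Lemma formZr G a x y : form G x (a *: y) = a * form G x y.
Proof. by rewrite /form linearZ /= -scalemxAr mxE. Qed.

Lemma formD1 G x x' y : form G (x + x') y = form G x y + form G x' y.
Proof. by rewrite -[x]scale1r formDl mul1r scale1r. Qed.

Lemma formD2 G x y y' : form G x (y + y') = form G x y + form G x y'.
Proof. by rewrite -[y]scale1r formDr mul1r scale1r. Qed.

Lemma formN1 G x y : form G (- x) y = - form G x y.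
Proof. by rewrite -scaleN1r formZl mulN1r. Qed.
Lemma formN2 G x y : form G x (- y) = - form G x y.
Proof. by rewrite -scaleN1r formZr mulN1r. Qed.
Lemma formB1 G x x' y : form G (x - x') y = form G x y - form G x' y.
Proof. by rewrite formD1 formN1. Qed.
Lemma formB2 G x y y' : form G x (y - y') = form G x y - form G x y'.
Proof. by rewrite formD2 formN2. Qed.

Lemma form_sym G x y : G^T = G -> form G x y = form G y x.
Proof.
move=> sG; rewrite /form -[in LHS]sG.
have -> : (x *m G^T *m y^T) = (y *m G *m x^T)^T by rewrite !trmx_mul trmxK mulmxA.
by rewrite mxE.
Qed.

Lemma form0l G y : form G 0 y = 0.
Proof. by rewrite /form !mul0mx mxE. Qed.
Lemma form0r G y : form G y 0 = 0.
Proof. by rewrite /form trmx0 mulmx0 mxE. Qed.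

End Aux.

Section Tens.
Variable R : realType.
Variable n : nat.
Implicit Types (G S : 'M[R]_n) (x y z w u v k : 'rV[R]_n).

Definition TS S x y z w := form S x w * form S y z - form S x z * form S y w.

Lemma TS_ACT S : S^T = S -> is_ACT (TS S).
Proof.
move=> sS; have sy := fun a b => form_sym a b sS.
split.
- split=> *; rewrite /TS ?formDl ?formDr; ring.
- by move=> x y z w; rewrite /TS (sy z y) (sy w x) (sy z x) (sy w y); ring.
- by move=> x y z w; rewrite /TS; ring.
- move=> x y z w; rewrite /TS (sy z x) (sy y x) (sy z y); ring.
Qed.

Definition Sk k : 'M[R]_n := 1%:M - ((k *m k^T) 0 0)^-1 *: (k^T *m k).

Lemma Sk_sym k : (Sk k)^T = Sk k.
Proof. by rewrite /Sk linearB /= linearZ /= trmx1 trmx_mul trmxK. Qed.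

Lemma kkT_neq0 k : k != 0 -> (k *m k^T) 0 0 != 0.
Proof.
move=> nk; apply/negP => /eqP h; move/negP: nk; apply; apply/eqP/rowP => j.
rewrite mxE in h.
have h0 : forall i : 'I_n, true -> 0 <= k 0 i * k^T i 0 by move=> i _; rewrite mxE -expr2 sqr_ge0.
have := psumr_eq0P h0 h (i := j) isT; rewrite mxE => /eqP; rewrite mulf_eq0 orbb => /eqP ->.
by rewrite mxE.
Qed.

Lemma Sk_mul k v : v *m Sk k = v - (((v *m k^T) 0 0) / ((k *m k^T) 0 0)) *: k.
Proof.
rewrite /Sk mulmxBr mulmx1 -scalemxAr mulmxA [in LHS](mx11_scalar (v *m k^T)) mul_scalar_mx.
by rewrite scalerA [_^-1 * _]mulrC.
Qed.

Lemma Sk_k k : k != 0 -> k *m Sk k = 0.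
Proof. by move=> nk; rewrite Sk_mul divff ?kkT_neq0 // scale1r subrr. Qed.

Lemma Sk_ker k v : v *m Sk k = 0 -> exists c, v = c *: k.
Proof. by rewrite Sk_mul => /eqP; rewrite subr_eq0 => /eqP ->; eexists. Qed.

Lemma form_delta S x j : form S x (delta_mx 0 j) = (x *m S) 0 j.
Proof. by rewrite /form trmx_delta -colE mxE. Qed.

Lemma form_delta_l S x j : S^T = S -> form S (delta_mx 0 j) x = (x *m S) 0 j.
Proof. by move=> sS; rewrite form_sym // form_delta. Qed.

End Tens.

Section Rank.
Variable R : realType.
Variable n : nat.
Implicit Types (G S : 'M[R]_n) (x y z w u v k : 'rV[R]_n).

Definition Jm : 'M[R]_2 :=
  \matrix_(i < 2, j < 2) (((i == 1%N :> nat) && (j == 0%N :> nat))%:R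
                          - ((i == 0%N :> nat) && (j == 1%N :> nat))%:R).

Lemma Jm_unit : Jm \in unitmx.
Proof.
suff h : Jm *m (- Jm) = 1%:M by case: (mulmx1_unit h).
apply/matrixP => i j; rewrite !mxE !big_ord_recl big_ord0 !mxE /=.
case: i => [[|[|i]] Hi] //; case: j => [[|[|j]] Hj] //=; rewrite ?mxE /=; ring.
Qed.

Lemma curv_mat S E :
  \matrix_(i < n, j < n) TS S (row 0 E) (row 1 E) (delta_mx 0 i) (delta_mx 0 j)
  = (E *m S)^T *m (Jm *m (E *m S)).
Proof.
apply/matrixP => i j; rewrite mxE /TS !form_delta -!row_mul.
set A := E *m S.
rewrite !mxE !big_ord_recl !big_ord0 !mxE /=.
rewrite !big_ord_recl !big_ord0 !mxE /=.
have -> : lift ord0 ord0 = 1 :> 'I_2 by apply/val_inj.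
ring.
Qed.

Lemma scal_neq0 (c : R) : c != 0 -> (Num.sqrt `|c|)^-1 != 0.
Proof.
move=> hc; rewrite invr_eq0; apply/lt0r_neq0; rewrite sqrtr_gt0 normr_gt0 //.
Qed.

Lemma rank_curv2 G S E : G \in unitmx ->
  row_free (E *m S) ->
  form G (row 0 E) (row 0 E) * form G (row 1 E) (row 1 E) - form G (row 0 E) (row 1 E) ^+ 2 != 0 ->
  \rank (curv_plane G (TS S) E) = 2%N.
Proof.
move=> uG fA hc; rewrite /curv_plane /= (eqmx_scale _ (scal_neq0 hc)).
rewrite /curv_op mxrankMfree; last by rewrite row_free_unit unitmx_inv.
rewrite curv_mat mxrankMfree ?mxrank_tr; first by apply/eqP.
by rewrite /row_free (eqmxMfull _ _); [exact: fA | rewrite row_full_unit Jm_unit].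
Qed.

Lemma rank_curv0 G S E : row 0 E *m S = 0 -> \rank (curv_plane G (TS S) E) = 0%N.
Proof.
move=> h0; rewrite /curv_plane /curv_op.
have -> : \matrix_(i < n, j < n) TS S (row 0 E) (row 1 E) (delta_mx 0 i) (delta_mx 0 j) = 0.
  by apply/matrixP => i j; rewrite !mxE /TS !form_delta h0 !mxE; ring.
by rewrite mul0mx scaler0 mxrank0.
Qed.

End Rank.

Section Sig.
Variable R : realType.
Implicit Types (M : 'M[R]_2) (a b v : 'rV[R]_2).

Lemma formNG k (M : 'M[R]_k) (u1 u2 : 'rV[R]_k) : form (- M) u1 u2 = - form M u1 u2.
Proof. by rewrite /form mulmxN mulNmx mxE. Qed.

Lemma form00 k (M : 'M[R]_k) : form M 0 0 = 0.
Proof. by rewrite /form mul0mx mul0mx mxE. Qed.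

Lemma row_nz m k (U : 'M[R]_(m, k)) : U != 0 -> exists i, row i U != 0.
Proof.
move=> nU; case: (pickP (fun i => row i U != 0)) => [i hi | h]; first by exists i.
move/negP: nU; case; apply/eqP/row_matrixP => i; rewrite row0; apply/eqP.
by have := h i; move/negbT; rewrite negbK.
Qed.

Lemma unit_of_def M : (forall v, v != 0 -> form M v v != 0) -> M \in unitmx.
Proof.
move=> h; rewrite -row_free_unit; apply: inj_row_free => v hv.
apply/eqP; apply/negP => /negP nv; have := h v nv.
by rewrite /form hv mul0mx mxE eqxx.
Qed.

Lemma max_none m M (U : 'M[R]_(m, 2)) :
  (forall v, v != 0 -> form M v v < 0) -> pos_def_on M U -> (\rank U <= 0)%N.
Proof.
move=> hn hp; rewrite leqn0 mxrank_eq0; apply/negP => /negP nU.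
have [i hi] := row_nz nU.
have := hp _ (row_sub i U) hi; have := hn _ hi; lra.
Qed.

Lemma ex_one M a : form M a a < 0 ->
  exists U : 'M[R]_(1, 2), row_free U /\ neg_def_on M U.
Proof.
move=> ha; have na : a != 0 by apply/negP => /eqP ea; move: ha; rewrite ea form00 ltxx.
exists a; split; first by rewrite /row_free rank_rV na.
move=> v /sub_rVP [c ->] nv.
have nc : c != 0 by apply/negP => /eqP ec; move: nv; rewrite ec scale0r eqxx.
rewrite formZl formZr mulrA -expr2.
have hc2 : 0 < c ^+ 2 by rewrite exprn_even_gt0.
nra.
Qed.

Lemma max_one m M b (U : 'M[R]_(m, 2)) : 0 < form M b b ->
  neg_def_on M U -> (\rank U <= 1)%N.
Proof.
move=> hb hn; rewrite leqNgt; apply/negP => r2.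
have fU : row_full U by rewrite -col_leq_rank.
have nb : b != 0 by apply/negP => /eqP eb; move: hb; rewrite eb form00 ltxx.
have := hn b (submx_full _ fU) nb; lra.
Qed.

Lemma negdef_opp k m (M : 'M[R]_k) (U : 'M[R]_(m, k)) : pos_def_on M U -> neg_def_on (- M) U.
Proof. by move=> h v hv nv; rewrite formNG oppr_lt0; exact: h. Qed.
Lemma posdef_opp k m (M : 'M[R]_k) (U : 'M[R]_(m, k)) : neg_def_on M U -> pos_def_on (- M) U.
Proof. by move=> h v hv nv; rewrite formNG oppr_gt0; exact: h. Qed.
Lemma negdef_opp' k m (M : 'M[R]_k) (U : 'M[R]_(m, k)) : neg_def_on (- M) U -> pos_def_on M U.
Proof. by move=> h v hv nv; have := h v hv nv; rewrite formNG oppr_lt0. Qed.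
Lemma posdef_opp' k m (M : 'M[R]_k) (U : 'M[R]_(m, k)) : pos_def_on (- M) U -> neg_def_on M U.
Proof. by move=> h v hv nv; have := h v hv nv; rewrite formNG oppr_gt0. Qed.

Lemma sig_mix M a b : M \in unitmx -> form M a a < 0 -> 0 < form M b b ->
  has_signature M 1 1.
Proof.
move=> uM ha hb; split => //.
- exact: ex_one ha.
- by move=> m U; apply: max_one hb.
- have hb' : form (- M) b b < 0 by rewrite formNG oppr_lt0.
  have [U [fU hU]] := @ex_one (- M) b hb'.
  by exists U; split => //; apply: negdef_opp'.
- move=> m U hU; apply: (@max_one m (- M) a); first by rewrite formNG oppr_gt0.
  exact: negdef_opp.
Qed.

Lemma ex_two M : (forall v, v != 0 -> form M v v < 0) ->
  exists U : 'M[R]_(2, 2), row_free U /\ neg_def_on M U.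
Proof.
move=> h; exists 1%:M; split; first by rewrite row_free_unit unitmx1.
by move=> v _; exact: h.
Qed.

Lemma ex_zero M : exists U : 'M[R]_(0, 2), row_free U /\ pos_def_on M U.
Proof.
exists 0; split; first by rewrite /row_free mxrank0.
by move=> v /mxrankS; rewrite mxrank0 leqn0 mxrank_eq0 => /eqP ->; rewrite eqxx.
Qed.

Lemma sig_neg M : (forall v, v != 0 -> form M v v < 0) -> has_signature M 2 0.
Proof.
move=> h; split.
- by apply: unit_of_def => v nv; apply: ltr0_neq0; exact: h.
- exact: ex_two.
- by move=> m U _; exact: rank_leq_col.
- exact: ex_zero.
- by move=> m U; apply: max_none.
Qed.

Lemma sig_pos M : (forall v, v != 0 -> 0 < form M v v) -> has_signature M 0 2.
Proof.
move=> h; have h' : forall v, v != 0 -> form (- M) v v < 0.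
  by move=> v nv; rewrite formNG oppr_lt0; exact: h.
split.
- by apply: unit_of_def => v nv; apply: lt0r_neq0; exact: h.
- have [U [fU hU]] := ex_zero (- M); by exists U; split => //; apply: posdef_opp'.
- by move=> m U hU; apply: (max_none h'); apply: posdef_opp.
- have [U [fU hU]] := ex_two h'; by exists U; split => //; apply: negdef_opp'.
- by move=> m U _; exact: rank_leq_col.
Qed.

Lemma sig_pos_def M v : has_signature M 0 2 -> v != 0 -> 0 < form M v v.
Proof.
case=> _ _ _ [U [fU hU]] _ nv; apply: hU nv.
by apply: submx_full; rewrite row_full_unit -row_free_unit.
Qed.

Lemma sig_neg_def M v : has_signature M 2 0 -> v != 0 -> form M v v < 0.
Proof.
case=> _ [U [fU hU]] _ _ _ nv; apply: hU nv.
by apply: submx_full; rewrite row_full_unit -row_free_unit.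
Qed.

End Sig.

Section Plane.
Variable R : realType.
Variable n : nat.
Variable G : 'M[R]_n.
Hypothesis sG : G^T = G.
Implicit Types (x y k : 'rV[R]_n) (E : 'M[R]_(2, n)).

Definition vec2 (a b : R) : 'rV[R]_2 := a *: delta_mx 0 0 + b *: delta_mx 0 1.

Lemma vec2_E (v : 'rV[R]_2) : v = vec2 (v 0 0) (v 0 1).
Proof.
apply/rowP => j; rewrite !mxE; case: j => [[|[|j]] Hj] //=; rewrite ?mulr1 ?mulr0 ?addr0 ?add0r; congr (v 0 _); exact/val_inj.
Qed.

Lemma vec2_nz (v : 'rV[R]_2) : v != 0 -> (v 0 0 != 0) || (v 0 1 != 0).
Proof.
move=> nv; rewrite -negb_and; apply/negP => /andP [/eqP h0 /eqP h1]; move/negP: nv; apply.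
by rewrite (vec2_E v) h0 h1 /vec2 !scale0r addr0.
Qed.

Lemma vec2_mul a b E : vec2 a b *m E = a *: row 0 E + b *: row 1 E.
Proof. by rewrite /vec2 mulmxDl -!scalemxAl -!rowE. Qed.

Lemma formQ x y a b c d :
  form G (a *: x + b *: y) (c *: x + d *: y)
  = a * c * form G x x + (a * d + b * c) * form G x y + b * d * form G y y.
Proof.
rewrite !formDl !formDr !formZl !formZr (form_sym y x sG); ring.
Qed.

Lemma form_gram E v w : form (E *m G *m E^T) v w = form G (v *m E) (w *m E).
Proof. by rewrite /form trmx_mul !mulmxA. Qed.

Definition Gr E := E *m G *m E^T.
Definition fxx E := form G (row 0 E) (row 0 E).
Definition fxy E := form G (row 0 E) (row 1 E).
Definition fyy E := form G (row 1 E) (row 1 E).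

Lemma gramQ E a b : form (Gr E) (vec2 a b) (vec2 a b)
  = a * a * fxx E + (a * b + b * a) * fxy E + b * b * fyy E.
Proof. by rewrite /Gr form_gram vec2_mul formQ. Qed.

Lemma plane_unit E : fxx E * fyy E - fxy E ^+ 2 != 0 -> Gr E \in unitmx.
Proof.
move=> hd; rewrite -row_free_unit; apply: inj_row_free => v hv.
have h w : form (Gr E) v w = 0 by rewrite /form hv mul0mx mxE.
have h1 := h (vec2 1 0); have h2 := h (vec2 0 1).
rewrite /Gr form_gram (vec2_E v) !vec2_mul formQ -/(fxx E) -/(fxy E) -/(fyy E) in h1.
rewrite /Gr form_gram (vec2_E v) !vec2_mul formQ -/(fxx E) -/(fxy E) -/(fyy E) in h2.
rewrite (vec2_E v); set a : R := v 0 0 in h1 h2 *; set b : R := v 0 1 in h1 h2 *.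
have e1 : a * fxx E + b * fxy E = 0 by rewrite -h1; ring.
have e2 : a * fxy E + b * fyy E = 0 by rewrite -h2; ring.
have ea : a * (fxx E * fyy E - fxy E ^+ 2) = (a * fxx E + b * fxy E) * fyy E - (a * fxy E + b * fyy E) * fxy E by ring.
rewrite e1 e2 !mul0r subrr in ea.
have eb : b * (fxx E * fyy E - fxy E ^+ 2) = (a * fxy E + b * fyy E) * fxx E - (a * fxx E + b * fxy E) * fxy E by ring.
rewrite e1 e2 !mul0r subrr in eb.
move/eqP: ea; rewrite mulf_eq0 (negbTE hd) orbF => /eqP ->.
move/eqP: eb; rewrite mulf_eq0 (negbTE hd) orbF => /eqP ->.
by rewrite /vec2 !scale0r addr0.
Qed.

Lemma plane_free E : Gr E \in unitmx -> row_free E.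
Proof.
move=> u; rewrite /row_free eqn_leq rank_leq_row /=.
have r2 : \rank (Gr E) = 2%N by move: u; rewrite -row_free_unit => /eqP.
by rewrite -{1}r2 /Gr -mulmxA mxrankM_maxl.
Qed.

Lemma plane_neg E : fxy E = 0 -> fxx E < 0 -> fyy E < 0 -> has_signature (Gr E) 2 0.
Proof.
move=> h0 h1 h2; apply: sig_neg => v /vec2_nz nv; rewrite (vec2_E v) gramQ h0.
set a := v 0 0 in nv *; set b := v 0 1 in nv *.
case/orP: nv => nz.
- have : 0 < a * a by rewrite -expr2 exprn_even_gt0.
  have : 0 <= b * b by rewrite -expr2 sqr_ge0.
  nra.
- have : 0 < b * b by rewrite -expr2 exprn_even_gt0.
  have : 0 <= a * a by rewrite -expr2 sqr_ge0.
  nra.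
Qed.

Lemma plane_pos E : fxy E = 0 -> 0 < fxx E -> 0 < fyy E -> has_signature (Gr E) 0 2.
Proof.
move=> h0 h1 h2; apply: sig_pos => v /vec2_nz nv; rewrite (vec2_E v) gramQ h0.
set a := v 0 0 in nv *; set b := v 0 1 in nv *.
case/orP: nv => nz.
- have : 0 < a * a by rewrite -expr2 exprn_even_gt0.
  have : 0 <= b * b by rewrite -expr2 sqr_ge0.
  nra.
- have : 0 < b * b by rewrite -expr2 exprn_even_gt0.
  have : 0 <= a * a by rewrite -expr2 sqr_ge0.
  nra.
Qed.

Lemma plane_mix E a b c d : fxx E * fyy E - fxy E ^+ 2 != 0 ->
  a * a * fxx E + (a * b + b * a) * fxy E + b * b * fyy E < 0 ->
  0 < c * c * fxx E + (c * d + d * c) * fxy E + d * d * fyy E ->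
  has_signature (Gr E) 1 1.
Proof.
move=> hd h1 h2; apply: (@sig_mix _ _ (vec2 a b) (vec2 c d)).
- exact: plane_unit.
- by rewrite gramQ.
- by rewrite gramQ.
Qed.

Lemma def_det E : (forall v : 'rV[R]_2, v != 0 -> form (Gr E) v v != 0) ->
  fxx E * fyy E - fxy E ^+ 2 != 0.
Proof.
move=> h.
have h0 : fxx E != 0.
  have := h (vec2 1 0); rewrite gramQ.
  have nz : vec2 1 0 != 0 by apply/negP => /eqP e; have := congr1 (fun m : 'rV[R]_2 => m 0 0) e; rewrite !mxE /=; lra.
  move=> /(_ nz); apply: contra => /eqP ->; apply/eqP; ring.
have nz : vec2 (fxy E) (- fxx E) != 0.
  apply/negP => /eqP e; have := congr1 (fun m : 'rV[R]_2 => m 0 1) e; rewrite !mxE /=.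
  move=> e'; have : - fxx E = 0 by rewrite -e'; ring.
  by move/eqP; rewrite oppr_eq0 (negbTE h0).
have := h _ nz; rewrite gramQ; apply: contra => /eqP hd.
apply/eqP.
have -> : fxy E * fxy E * fxx E + (fxy E * - fxx E + - fxx E * fxy E) * fxy E + - fxx E * - fxx E * fyy E
   = fxx E * (fxx E * fyy E - fxy E ^+ 2) by ring.
by rewrite hd mulr0.
Qed.

End Plane.

Section Gen.
Variable R : realType.
Variable n : nat.
Variable G : 'M[R]_n.
Hypothesis sG : G^T = G.
Hypothesis uG : G \in unitmx.
Implicit Types (x y k : 'rV[R]_n) (E : 'M[R]_(2, n)).

Lemma free_ES k E : (forall v : 'rV[R]_2, v != 0 -> forall c, v *m E != c *: k) ->
  row_free (E *m Sk k).
Proof.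
move=> h; apply: inj_row_free => v; rewrite mulmxA => /Sk_ker [c hc].
apply/eqP; apply/negP => /negP nv; by move: (h v nv c); rewrite hc eqxx.
Qed.

Lemma space_rank2 k : form G k k <= 0 -> spacelike_rank G (TS (Sk k)) 2.
Proof.
move=> hk E fE sig; apply: rank_curv2 => //.
- apply: free_ES => v nv c; apply/eqP => e.
  have := sig_pos_def sig nv; rewrite form_gram e formZl formZr.
  have : 0 <= c * c by rewrite -expr2 sqr_ge0.
  nra.
- apply: (def_det sG) => v nv; apply: lt0r_neq0; exact: sig_pos_def sig nv.
Qed.

Lemma time_rank2 k : 0 <= form G k k -> timelike_rank G (TS (Sk k)) 2.
Proof.
move=> hk E fE sig; apply: rank_curv2 => //.
- apply: free_ES => v nv c; apply/eqP => e.
  have := sig_neg_def sig nv; rewrite form_gram e formZl formZr.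
  have : 0 <= c * c by rewrite -expr2 sqr_ge0.
  nra.
- apply: (def_det sG) => v nv; apply: ltr0_neq0; exact: sig_neg_def sig nv.
Qed.

Definition mk2 x y : 'M[R]_(2, n) := \matrix_(i < 2, j < n) if i == 0 then x 0 j else y 0 j.

Lemma mk2_0 x y : row 0 (mk2 x y) = x.
Proof. by apply/rowP => j; rewrite !mxE. Qed.
Lemma mk2_1 x y : row 1 (mk2 x y) = y.
Proof. by apply/rowP => j; rewrite !mxE. Qed.

Lemma mk2_mul x y (v : 'rV[R]_2) : v *m mk2 x y = v 0 0 *: x + v 0 1 *: y.
Proof. by rewrite {1}(vec2_E v) vec2_mul mk2_0 mk2_1. Qed.

Lemma plane_rank2 k x y :
  k != 0 ->
  form G x x * form G y y - form G x y ^+ 2 != 0 ->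
  (forall a b c, a *: x + b *: y = c *: k -> a = 0 /\ b = 0) ->
  \rank (curv_plane G (TS (Sk k)) (mk2 x y)) = 2%N.
Proof.
move=> nk hd hi; apply: rank_curv2 => //; last by rewrite !mk2_0 !mk2_1.
apply: free_ES => v /vec2_nz nv c; apply/eqP; rewrite mk2_mul => /hi [h0 h1].
by move: nv; rewrite h0 h1 eqxx.
Qed.

Lemma plane_rank0 k y : k != 0 -> \rank (curv_plane G (TS (Sk k)) (mk2 k y)) = 0%N.
Proof. by move=> nk; apply: rank_curv0; rewrite mk2_0 Sk_k. Qed.

End Gen.

Section ON.
Variable R : realType.
Variable n : nat.
Variable G : 'M[R]_n.
Hypothesis sG : G^T = G.
Implicit Types (x y u v k t s : 'rV[R]_n).

Local Notation f := (form G).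

Lemma comb_nz m (U : 'M[R]_(m, n)) (i j : 'I_m) c :
  row_free U -> i != j -> row j U - c *: row i U != 0.
Proof.
move=> fU ij; rewrite !rowE scalemxAl -mulmxBl mulmx_free_eq0 //.
apply/negP => /eqP e; have := congr1 (fun M : 'rV[R]_m => M 0 j) e.
rewrite !mxE !eqxx /= eq_sym (negbTE ij) /= mulr0 subr0 => /eqP; by rewrite oner_eq0.
Qed.

Definition nrm v := (Num.sqrt `|f v v|)^-1 *: v.

Lemma nrm_neg v : f v v < 0 -> f (nrm v) (nrm v) = -1.
Proof.
move=> h; rewrite /nrm formZl formZr.
set s := Num.sqrt _.
have s2 : s ^+ 2 = - f v v by rewrite sqr_sqrtr ?normr_ge0 // ltr0_norm.
have s0 : s != 0 by rewrite /s sqrtr_eq0 -ltNge normr_gt0 ltr0_neq0.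
by rewrite -[f v v in LHS]opprK -s2; field.
Qed.

Lemma nrm_pos v : 0 < f v v -> f (nrm v) (nrm v) = 1.
Proof.
move=> h; rewrite /nrm formZl formZr.
set s := Num.sqrt _.
have s2 : s ^+ 2 = f v v by rewrite sqr_sqrtr ?normr_ge0 // gtr0_norm.
have s0 : s != 0 by rewrite /s sqrtr_eq0 -ltNge normr_gt0 lt0r_neq0.
by rewrite -[f v v in LHS]s2; field.
Qed.

Lemma nrm_orth v w : f v w = 0 -> f (nrm v) w = 0.
Proof. by move=> h; rewrite /nrm formZl h mulr0. Qed.

Lemma nrm_sub m (U : 'M[R]_(m, n)) v : (v <= U)%MS -> (nrm v <= U)%MS.
Proof. by move=> h; apply: scalemx_sub. Qed.

Lemma fsym x y : f x y = f y x.
Proof. exact: form_sym. Qed.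

Section Proj.
Variables t1 t2 : 'rV[R]_n.
Hypotheses (h1 : f t1 t1 = -1) (h2 : f t2 t2 = -1) (h12 : f t1 t2 = 0).

Definition P x := x + f x t1 *: t1 + f x t2 *: t2.

Lemma P_t1 x : f (P x) t1 = 0.
Proof. rewrite /P !formD1 !formZl h1 (fsym t2 t1) h12; ring. Qed.
Lemma P_t2 x : f (P x) t2 = 0.
Proof. rewrite /P !formD1 !formZl h2 h12; ring. Qed.

Lemma P_norm x : f (P x) (P x) = f x x + f x t1 ^+ 2 + f x t2 ^+ 2.
Proof.
rewrite /P !formD1 !formD2 !formZl !formZr h1 h2 (fsym t2 t1) h12 (fsym t1 x) (fsym t2 x); ring.
Qed.

Lemma P_lin x y c : P (x - c *: y) = P x - c *: P y.
Proof.
rewrite /P !formB1 !formZl; apply/rowP => j; rewrite !mxE; ring.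
Qed.

Lemma P_fix x : f x t1 = 0 -> f x t2 = 0 -> P x = x.
Proof. by move=> a b; rewrite /P a b !scale0r !addr0. Qed.
End Proj.

Definition ONsys t1 t2 s1 s2 :=
  [/\ f t1 t1 = -1, f t2 t2 = -1, f s1 s1 = 1, f s2 s2 = 1 &
   [/\ f t1 t2 = 0, f t1 s1 = 0, f t1 s2 = 0 & [/\ f t2 s1 = 0, f t2 s2 = 0 & f s1 s2 = 0]]].

Lemma ON_exists p q : (2 <= p)%N -> (2 <= q)%N -> has_signature G p q ->
  exists t1 t2 s1 s2, ONsys t1 t2 s1 s2.
Proof.
move=> hp hq [uG [U [fU hU]] _ [W [fW hW]] _].
pose i0 : 'I_p := Ordinal (leq_trans (isT : (0 < 2)%N) hp).
pose i1 : 'I_p := Ordinal hp.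
pose j0 : 'I_q := Ordinal (leq_trans (isT : (0 < 2)%N) hq).
pose j1 : 'I_q := Ordinal hq.
have i01 : i0 != i1 by [].
have j01 : j0 != j1 by [].
set a1 := row i0 U; set a2 := row i1 U; set b1 := row j0 W; set b2 := row j1 W.
have a1n : a1 != 0 by have := comb_nz 0 fU (i01 : i1 != i0); rewrite scale0r subr0.
have fa1 : f a1 a1 < 0 by apply: hU a1n; exact: row_sub.
pose t1 := nrm a1.
have ht1 : f t1 t1 = -1 by exact: nrm_neg.
pose r1 := (Num.sqrt `|f a1 a1|)^-1.
pose al2 := a2 + f a2 t1 *: t1.
have al2E : al2 = a2 - (- (f a2 t1 * r1)) *: a1 by rewrite scaleNr opprK /al2 {2}/t1 /nrm scalerA.
have al2n : al2 != 0 by rewrite al2E; apply: comb_nz.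
have al2s : (al2 <= U)%MS by rewrite al2E; apply: addmx_sub; [exact: row_sub | rewrite -scaleNr; apply: scalemx_sub; exact: row_sub].
have fal2 : f al2 al2 < 0 by exact: hU.
have o12 : f al2 t1 = 0 by rewrite /al2 formD1 formZl ht1; ring.
pose t2 := nrm al2.
have ht2 : f t2 t2 = -1 by exact: nrm_neg.
have h12 : f t1 t2 = 0 by rewrite fsym; exact: nrm_orth.
have b1n : b1 != 0 by have := comb_nz 0 fW (j01 : j1 != j0); rewrite scale0r subr0.
have fb1 : 0 < f b1 b1 by apply: hW b1n; exact: row_sub.
pose be1 := P t1 t2 b1.
have fbe1 : 0 < f be1 be1.
  rewrite /be1 P_norm //; have := sqr_ge0 (f b1 t1); have := sqr_ge0 (f b1 t2); lra.
pose s1 := nrm be1.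
have hs1 : f s1 s1 = 1 by exact: nrm_pos.
have h1s1 : f t1 s1 = 0 by rewrite fsym; apply: nrm_orth; exact: P_t1.
have h2s1 : f t2 s1 = 0 by rewrite fsym; apply: nrm_orth; exact: P_t2.
pose rb := (Num.sqrt `|f be1 be1|)^-1.
have s1E : s1 = rb *: be1 by [].
have be1E : be1 = P t1 t2 b1 by [].
clearbody s1 be1.
pose d := f (P t1 t2 b2) s1 * rb.
pose v := b2 - d *: b1.
have be2E : P t1 t2 b2 - f (P t1 t2 b2) s1 *: (rb *: be1) = P t1 t2 v.
  by rewrite /v P_lin // -be1E scalerA.
rewrite -s1E in be2E.
have vn : v != 0 by apply: comb_nz.
have vs : (v <= W)%MS.
  apply: addmx_sub; first exact: row_sub.
  rewrite -scaleNr; apply: scalemx_sub; exact: row_sub.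
clearbody v d.
pose be2 := P t1 t2 b2 - f (P t1 t2 b2) s1 *: s1.
have fbe2 : 0 < f be2 be2.
  rewrite /be2 be2E P_norm //.
  have := hW _ vs vn; have := sqr_ge0 (f v t1); have := sqr_ge0 (f v t2); lra.
pose s2 := nrm be2.
have hs2 : f s2 s2 = 1 by exact: nrm_pos.
have h1s2 : f t1 s2 = 0.
  by rewrite fsym; apply: nrm_orth; rewrite /be2 be2E; exact: P_t1.
have h2s2 : f t2 s2 = 0.
  by rewrite fsym; apply: nrm_orth; rewrite /be2 be2E; exact: P_t2.
have hs12 : f s1 s2 = 0.
  rewrite fsym; apply: nrm_orth; rewrite /be2 formB1 formZl hs1; ring.
by exists t1, t2, s1, s2; do !split.
Qed.

End ON.

Section Main.
Variable R : realType.
Variable n : nat.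
Variable G : 'M[R]_n.
Hypothesis sG : G^T = G.
Hypothesis uG : G \in unitmx.
Local Notation f := (form G).
Variables t1 t2 s1 s2 : 'rV[R]_n.
Hypotheses (e11 : f t1 t1 = -1) (e22 : f t2 t2 = -1) (e33 : f s1 s1 = 1) (e44 : f s2 s2 = 1).
Hypotheses (e12 : f t1 t2 = 0) (e13 : f t1 s1 = 0) (e14 : f t1 s2 = 0)
           (e23 : f t2 s1 = 0) (e24 : f t2 s2 = 0) (e34 : f s1 s2 = 0).
Hypotheses (e21 : f t2 t1 = 0) (e31 : f s1 t1 = 0) (e41 : f s2 t1 = 0)
           (e32 : f s1 t2 = 0) (e42 : f s2 t2 = 0) (e43 : f s2 s1 = 0).

Ltac fs := do 4 rewrite ?formD1 ?formD2 ?formN1 ?formN2 ?formZl ?formZr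
  ?e11 ?e22 ?e33 ?e44 ?e12 ?e13 ?e14 ?e23 ?e24 ?e34 ?e21 ?e31 ?e41 ?e32 ?e42 ?e43.

Ltac neq0 := apply/negP => /eqP ?; lra.

Lemma nz_of k w : f k w != 0 -> k != 0.
Proof. by apply: contra => /eqP ->; rewrite form0l. Qed.

Lemma Gr_mk2 x y : fxx G (mk2 x y) = f x x /\ fxy G (mk2 x y) = f x y /\ fyy G (mk2 x y) = f y y.
Proof. by rewrite /fxx /fxy /fyy !mk2_0 !mk2_1. Qed.

Lemma neg_plane x y : f x y = 0 -> f x x < 0 -> f y y < 0 ->
  row_free (mk2 x y) /\ has_signature (mk2 x y *m G *m (mk2 x y)^T) 2 0.
Proof.
move=> h0 h1 h2; have [a [b c]] := Gr_mk2 x y.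
split; last by apply: (plane_neg sG); rewrite ?a ?b ?c.
apply: (plane_free (G := G)); apply: (plane_unit sG); rewrite a b c h0.
apply: lt0r_neq0; nra.
Qed.

Lemma pos_plane x y : f x y = 0 -> 0 < f x x -> 0 < f y y ->
  row_free (mk2 x y) /\ has_signature (mk2 x y *m G *m (mk2 x y)^T) 0 2.
Proof.
move=> h0 h1 h2; have [a [b c]] := Gr_mk2 x y.
split; last by apply: (plane_pos sG); rewrite ?a ?b ?c.
apply: (plane_free (G := G)); apply: (plane_unit sG); rewrite a b c h0.
apply: lt0r_neq0; nra.
Qed.

Lemma mix_plane x y a b c d : f x x * f y y - f x y ^+ 2 != 0 ->
  a * a * f x x + (a * b + b * a) * f x y + b * b * f y y < 0 ->
  0 < c * c * f x x + (c * d + d * c) * f x y + d * d * f y y ->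
  row_free (mk2 x y) /\ has_signature (mk2 x y *m G *m (mk2 x y)^T) 1 1.
Proof.
move=> hd h1 h2; have [ea [eb ec]] := Gr_mk2 x y.
split.
- by apply: (plane_free (G := G)); apply: (plane_unit sG); rewrite ea eb ec.
- by apply: (plane_mix (a := a) (b := b) (c := c) (d := d) sG); rewrite ?ea ?eb ?ec.
Qed.

Lemma t1n : t1 != 0. Proof. by apply: (nz_of (w := t1)); rewrite e11 oppr_eq0 oner_eq0. Qed.
Lemma s1n : s1 != 0. Proof. by apply: (nz_of (w := s1)); rewrite e33 oner_eq0. Qed.
Lemma kn : t1 + s1 != 0. Proof. by apply: (nz_of (w := t1)); fs; rewrite addr0 oppr_eq0 oner_eq0. Qed.

Lemma part1 : exists T, [/\ is_ACT T, spacelike_rank G T 2,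
                    ~ const_timelike_rank G T & ~ const_mixed_rank G T].
Proof.
exists (TS (Sk t1)); split.
- by apply: TS_ACT; apply: Sk_sym.
- by apply: space_rank2 => //; rewrite e11 lerN10.
- move=> [r hr].
  have [fA sA] := @neg_plane t1 t2 e12 ltac:(by rewrite e11 ltrN10) ltac:(by rewrite e22 ltrN10).
  have := hr _ fA sA; rewrite plane_rank0 ?t1n // => r0; subst r.
  have hyy : f (t1 + 2^-1 *: s1) (t1 + 2^-1 *: s1) < 0 by fs; lra.
  have hxy : f t2 (t1 + 2^-1 *: s1) = 0 by fs; lra.
  have [fB sB] := @neg_plane t2 _ hxy ltac:(by rewrite e22 ltrN10) hyy.
  have := hr _ fB sB; rewrite plane_rank2 ?t1n //.
  + rewrite hxy; move: hyy; rewrite e22 => hyy; neq0.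
  + move=> a b c e.
    have h1 := congr1 (fun z => f z t2) e; have h2 := congr1 (fun z => f z s1) e.
    rewrite /= in h1 h2; fs; move: h1 h2; fs; lra.
- move=> [r hr].
  have [fA sA] := @mix_plane t1 s1 1 0 0 1 ltac:(by fs; neq0) ltac:(by fs; lra) ltac:(by fs; lra).
  have := hr _ fA sA; rewrite plane_rank0 ?t1n // => r0; subst r.
  have [fB sB] := @mix_plane t2 s1 1 0 0 1 ltac:(by fs; neq0) ltac:(by fs; lra) ltac:(by fs; lra).
  have := hr _ fB sB; rewrite plane_rank2 ?t1n //.
  + fs; neq0.
  + move=> a b c e.
    have h1 := congr1 (fun z => f z t2) e; have h2 := congr1 (fun z => f z s1) e.
    rewrite /= in h1 h2; move: h1 h2; fs; lra.
Qed.

Lemma part2 : exists T, [/\ is_ACT T, timelike_rank G T 2,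
                    ~ const_spacelike_rank G T & ~ const_mixed_rank G T].
Proof.
exists (TS (Sk s1)); split.
- by apply: TS_ACT; apply: Sk_sym.
- by apply: time_rank2 => //; rewrite e33 ler01.
- move=> [r hr].
  have [fA sA] := @pos_plane s1 s2 e34 ltac:(by rewrite e33 ltr01) ltac:(by rewrite e44 ltr01).
  have := hr _ fA sA; rewrite plane_rank0 ?s1n // => r0; subst r.
  have hyy : 0 < f (s1 + 2^-1 *: t1) (s1 + 2^-1 *: t1) by fs; lra.
  have hxy : f s2 (s1 + 2^-1 *: t1) = 0 by fs; lra.
  have [fB sB] := @pos_plane s2 _ hxy ltac:(by rewrite e44 ltr01) hyy.
  have := hr _ fB sB; rewrite plane_rank2 ?s1n //.
  + rewrite hxy; move: hyy; rewrite e44 => hyy; neq0.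
  + move=> a b c e.
    have h1 := congr1 (fun z => f z s2) e; have h2 := congr1 (fun z => f z t1) e.
    rewrite /= in h1 h2; move: h1 h2; fs; lra.
- move=> [r hr].
  have [fA sA] := @mix_plane s1 t1 0 1 1 0 ltac:(by fs; neq0) ltac:(by fs; lra) ltac:(by fs; lra).
  have := hr _ fA sA; rewrite plane_rank0 ?s1n // => r0; subst r.
  have [fB sB] := @mix_plane t2 s2 1 0 0 1 ltac:(by fs; neq0) ltac:(by fs; lra) ltac:(by fs; lra).
  have := hr _ fB sB; rewrite plane_rank2 ?s1n //.
  + fs; neq0.
  + move=> a b c e.
    have h1 := congr1 (fun z => f z t2) e; have h2 := congr1 (fun z => f z s2) e.
    rewrite /= in h1 h2; move: h1 h2; fs; lra.
Qed.

Lemma part3 : exists T, [/\ is_ACT T, spacelike_rank G T 2,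
                    timelike_rank G T 2 & ~ const_mixed_rank G T].
Proof.
exists (TS (Sk (t1 + s1))); split.
- by apply: TS_ACT; apply: Sk_sym.
- by apply: space_rank2 => //; fs; lra.
- by apply: time_rank2 => //; fs; lra.
- move=> [r hr].
  have [fA sA] := @mix_plane (t1 + s1) (t1 - s1) 1 1 1 (-1) ltac:(by fs; neq0) ltac:(by fs; lra) ltac:(by fs; lra).
  have := hr _ fA sA; rewrite plane_rank0 ?kn // => r0; subst r.
  have [fB sB] := @mix_plane t2 s1 1 0 0 1 ltac:(by fs; neq0) ltac:(by fs; lra) ltac:(by fs; lra).
  have := hr _ fB sB; rewrite plane_rank2 ?kn //.
  + fs; neq0.
  + move=> a b c e.
    have h1 := congr1 (fun z => f z t2) e; have h2 := congr1 (fun z => f z s1) e.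
    have h3 := congr1 (fun z => f z t1) e.
    rewrite /= in h1 h2 h3; move: h1 h2 h3; fs; lra.
Qed.

End Main.

Theorem lemma2p2 (R : realType) (n p q : nat) (G : 'M[R]_n) :
  (2 <= p)%N -> (2 <= q)%N -> G^T = G -> has_signature G p q ->
  [/\ exists T, [/\ is_ACT T, spacelike_rank G T 2,
                    ~ const_timelike_rank G T & ~ const_mixed_rank G T],
      exists T, [/\ is_ACT T, timelike_rank G T 2,
                    ~ const_spacelike_rank G T & ~ const_mixed_rank G T] &
      exists T, [/\ is_ACT T, spacelike_rank G T 2,
                    timelike_rank G T 2 & ~ const_mixed_rank G T]].
Proof.
move=> hp hq sG sig.
have uG : G \in unitmx by case: sig.
have [t1 [t2 [s1 [s2 [e11 e22 e33 e44 [e12 e13 e14 [e23 e24 e34]]]]]]] := ON_exists sG hp hq sig.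
have fsy := fun x y => @form_sym R n G x y sG.
have e21 : form G t2 t1 = 0 by rewrite fsy.
have e31 : form G s1 t1 = 0 by rewrite fsy.
have e41 : form G s2 t1 = 0 by rewrite fsy.
have e32 : form G s1 t2 = 0 by rewrite fsy.
have e42 : form G s2 t2 = 0 by rewrite fsy.
have e43 : form G s2 s1 = 0 by rewrite fsy.
split.
- exact: (part1 sG uG e11 e22 e33 e12 e13 e23 e21 e31 e32).
- exact: (part2 sG uG e11 e22 e33 e44 e13 e14 e24 e34 e31 e41 e32 e42 e43).
- exact: (part3 sG uG e11 e22 e33 e12 e13 e23 e21 e31 e32).
Qed.
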